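(* Consider the three-level model described in the context, in which the first predator's prey selection is fixed (so that $\tilde X_t$ has a distribution not depending on $t$; call it $\tilde X$), and a second predator consumes first predators; let $\tilde Y$ denote the parasite burden of a first predator given that it has been consumed by the second predator. Then \[ \frac{\mathbb{E}(\tilde{Y}^{2})}{\mathbb{E}(\tilde{Y})} \geq \mathbb{E}(\tilde{Y}) + \frac{\mathbb{E}(\tilde{X}^{2})}{\mathbb{E}(\tilde{X})}. \]
   Context: Model. The parasite burden of a prey aged $t\ge 0$ is $X_t$, where $(X_t)_{t\ge0}$ is a non-decreasing integer-valued stochastic process with $X_0=0$ (all moments used are assumed finite and the relevant expectations positive). Prey ages have probability density $f_A$ on $[0,\infty)$. A (first) predator encounters random prey at the times of a non-homogeneous Poisson process with intensity $\phi$; a predator aged $t$ consumes an encountered prey aged $u$ with probability $p(u,t)$. Consumption times form a Poisson process with intensity $\psi(t)=\phi(t)\int_0^\infty p(u,t)f_A(u)\,du$. The age $\tilde A_t$ of a prey consumed by a predator aged $t$ has density $p(a,t)f_A(a)/\int_0^\infty p(u,t)f_A(u)\,du$, and $\tilde X_t=X_{\tilde A_t}$ ($\tilde A_t$ independent of $X$). Consumed prey transfer all their parasites, with independent contributions; the first predator's burden $Y_t$ at age $t$ ($Y_0=0$) is the sum over consumption times $s\le t$ of independent copies of $\tilde X_s$. Fixed prey selection means that for all $s<t$ the ratio $p(u,t)/p(u,s)$ does not depend on $u$, so the law of $\tilde A_t$, hence of $\tilde X_t$, does not depend on $t$. A second predator consumes first predators; the age of a first predator consumed by the second predator has probability density $f_{\tilde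 A}$ (the second predator's prey selection being fixed), and $\tilde Y=Y_{\tilde A}$ where $\tilde A\sim f_{\tilde A}$ is independent of the process $(Y_t)$. *)

(* Defs.v *)
From HB Require Import structures.
From mathcomp Require Import all_boot all_order all_algebra.
From mathcomp Require Import all_classical all_reals all_analysis.
Set Implicit Arguments. Unset Strict Implicit. Unset Printing Implicit Defensive.
Import Order.TTheory GRing.Theory Num.Theory.
Import numFieldNormedType.Exports.
Local Open Scope classical_set_scope.
Local Open Scope ring_scope.

Section model.
Variable R : realType.

Definition is_pmf (p : nat -> R) : Prop :=
  (forall k, 0 <= p k) /\ (\sum_(0 <= k <oo) (p k)%:E = 1)%E.

Definition conv (p q : nat -> R) (k : nat) : R :=
  \sum_(i < k.+1) p i * q (k - i)%N.

(* n-fold convolution: law of the sum of n independent copies of a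
   variable with law p (the empty sum is 0) *)
Fixpoint convn (p : nat -> R) (n : nat) : nat -> R :=
  match n with
  | O => fun k => (k == 0%N)%:R
  | S m => conv (convn p m) p
  end.

(* Poisson(lam) weights, valid also for lam = 0 *)
Definition poisw (lam : R) (n : nat) : R :=
  expR (- lam) * lam ^+ n / n`!%:R.

Definition cumint (psi : R -> R) (t : R) : R :=
  fine (\int[lebesgue_measure]_(s in `[0%R, t]) (psi s)%:E)%E.

(* law of the first predator's burden Y_t: the consumption times in [0,t]
   form a Poisson process of intensity psi, so their number is
   Poisson(Lambda(t)); each consumption adds an independent copy of Xtilde
   (law px). *)
Definition lawY (px : nat -> R) (psi : R -> R) (t : R) (k : nat) : \bar R :=
  (\sum_(0 <= n <oo) (poisw (cumint psi t) n * convn px n k)%:E)%E.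

(* law of Ytilde = Y_{Atilde}, Atilde with density fAt independent of Y *)
Definition lawYt (px : nat -> R) (psi fAt : R -> R) (k : nat) : \bar R :=
  (\int[lebesgue_measure]_(a in `[0%R, +oo[) ((fAt a)%:E * lawY px psi a k))%E.

Definition mom1 (p : nat -> \bar R) : \bar R :=
  (\sum_(0 <= k <oo) (k%:R)%:E * p k)%E.
Definition mom2 (p : nat -> \bar R) : \bar R :=
  (\sum_(0 <= k <oo) ((k%:R) ^+ 2)%:E * p k)%E.

End model.

(* Main.v *)
Require Import Defs.
From HB Require Import structures.
From mathcomp Require Import all_boot all_order all_algebra.
From mathcomp Require Import all_classical all_reals all_analysis.
From mathcomp Require Import ring lra.
From mathcomp Require Import measurable_realfun.
Set Implicit Arguments. Unset Strict Implicit. Unset Printing Implicit Defensive.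
Import Order.TTheory GRing.Theory Num.Theory.
Import numFieldNormedType.Exports.
Local Open Scope classical_set_scope.
Local Open Scope ring_scope.

Section H.
Variable R : realType.
Local Open Scope ereal_scope.

Lemma series_fin (f : nat -> \bar R) N :
  (forall k, 0 <= f k) -> (forall k, (N <= k)%N -> f k = 0) ->
  \sum_(k <oo) f k = \sum_(0 <= k < N) f k.
Proof.
move=> f0 fN.
rewrite (nneseries_split 0 N) // add0n eseries0 ?adde0 //.
by move=> i Ni _; apply: fN.
Qed.

Lemma series_from (f : nat -> \bar R) i :
  (forall k, 0 <= f k) ->
  \sum_(k <oo) (if (i <= k)%N then f k else 0) = \sum_(j <oo) f (j + i)%N.
Proof.
move=> f0; rewrite nneseries_addn //.
rewrite (nneseries_split 0 i); last by move=> k _; case: ifP.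
rewrite add0n big1_seq ?add0e; last first.
  by move=> k /andP[_]; rewrite mem_index_iota => /andP[_ ki]; rewrite leqNgt ki.
apply/congr_lim/funext => n. rewrite big_nat_cond [RHS]big_nat_cond; by apply: eq_bigr => k /andP[/andP[->]]. Qed.


Lemma conv_series (w p q : nat -> R) :
  (forall k, (0 <= w k)%R) -> (forall k, (0 <= p k)%R) -> (forall k, (0 <= q k)%R) ->
  \sum_(k <oo) (w k * Defs.conv p q k)%:E =
  \sum_(i <oo) \sum_(j <oo) (w (j + i)%N * p i * q j)%:E.
Proof.
move=> w0 p0 q0.
have a0 k i : 0 <= (if (i <= k)%N then (w k * p i * q (k - i)%N)%:E else 0).
  by case: ifP => // _; rewrite lee_fin !mulr_ge0.
transitivity (\sum_(k <oo) \sum_(i <oo)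
   (if (i <= k)%N then (w k * p i * q (k - i)%N)%:E else 0)).
  apply: eq_eseriesr => k _; rewrite (@series_fin _ k.+1) //; last first.
    by move=> i; rewrite ltnNge => /negbTE ->.
  rewrite /Defs.conv mulr_sumr -sumEFin big_mkord; apply: eq_bigr => i _.
  by rewrite -ltnS ltn_ord mulrA.
rewrite nneseries_interchange //; apply: eq_eseriesr => i _.
rewrite series_from; last by move=> k; rewrite lee_fin !mulr_ge0.
by apply: eq_eseriesr => j _; rewrite addnK.
Qed.

Section convmom.
Variables (q : nat -> R) (m1 m2 : R).
Hypothesis q0 : forall k, (0 <= q k)%R.
Hypothesis qs : \sum_(k <oo) (q k)%:E = 1.
Hypothesis qm1 : \sum_(k <oo) (k%:R * q k)%:E = m1%:E.
Hypothesis qm2 : \sum_(k <oo) (k%:R ^+ 2 * q k)%:E = m2%:E.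

Lemma m1_ge0 : (0 <= m1)%R.
Proof. by rewrite -lee_fin -qm1; apply: nneseries_ge0 => k _ _; rewrite lee_fin mulr_ge0. Qed.
Lemma m2_ge0 : (0 <= m2)%R.
Proof. by rewrite -lee_fin -qm2; apply: nneseries_ge0 => k _ _; rewrite lee_fin mulr_ge0 ?exprn_ge0. Qed.

Variable p : nat -> R.
Hypothesis p0 : forall k, (0 <= p k)%R.

Lemma conv_m0 : \sum_(k <oo) (Defs.conv p q k)%:E = \sum_(k <oo) (p k)%:E.
Proof.
transitivity (\sum_(k <oo) ((fun=> 1%R) k * Defs.conv p q k)%:E).
  by apply: eq_eseriesr => k _; rewrite mul1r.
rewrite conv_series //; apply: eq_eseriesr => i _.
transitivity (\sum_(j <oo) ((p i)%:E * (q j)%:E)).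
  by apply: eq_eseriesr => j _; rewrite mul1r EFinM.
by rewrite nneseriesZl // ?qs ?mule1 // => j _; rewrite lee_fin.
Qed.

Lemma conv_m1 : \sum_(k <oo) (k%:R * Defs.conv p q k)%:E =
  m1%:E * \sum_(k <oo) (p k)%:E + \sum_(k <oo) (k%:R * p k)%:E.
Proof.
rewrite conv_series //; try by move=> k; rewrite ?ler0n.
transitivity (\sum_(i <oo) ((m1 * p i)%:E + (i%:R * p i)%:E)).
  apply: eq_eseriesr => i _.
  transitivity (\sum_(j <oo) ((p i)%:E * (j%:R * q j)%:E + (p i * i%:R)%:E * (q j)%:E)).
    by apply: eq_eseriesr => j _; rewrite -!EFinM -EFinD natrD; congr (_%:E); ring.
  rewrite nneseriesD; first last.
  - by move=> j _ _; rewrite -EFinM lee_fin !mulr_ge0.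
  - by move=> j _ _; rewrite -EFinM lee_fin !mulr_ge0.
  rewrite !nneseriesZl ?qm1 ?qs //; last 2 first.
  - by move=> j _; rewrite lee_fin.
  - by move=> j _; rewrite lee_fin mulr_ge0.
  by rewrite mule1 -EFinM; congr (_ + _); rewrite mulrC.
rewrite nneseriesD; first last.
- by move=> j _ _; rewrite lee_fin !mulr_ge0.
- by move=> j _ _; rewrite lee_fin !mulr_ge0 ?m1_ge0.
rewrite -nneseriesZl //; last by move=> j _; rewrite lee_fin.
Qed.

Lemma conv_m2 : \sum_(k <oo) (k%:R ^+ 2 * Defs.conv p q k)%:E =
  m2%:E * \sum_(k <oo) (p k)%:E + (2 * m1)%:E * \sum_(k <oo) (k%:R * p k)%:E
  + \sum_(k <oo) (k%:R ^+ 2 * p k)%:E.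
Proof.
rewrite conv_series //; try by move=> k; rewrite ?exprn_ge0 ?ler0n.
transitivity (\sum_(i <oo) ((m2 * p i)%:E + ((2 * m1) * (i%:R * p i))%:E
   + (i%:R ^+ 2 * p i)%:E)).
  apply: eq_eseriesr => i _.
  transitivity (\sum_(j <oo) ((p i)%:E * (j%:R ^+ 2 * q j)%:E
     + (p i * 2 * i%:R)%:E * (j%:R * q j)%:E + (p i * i%:R ^+ 2)%:E * (q j)%:E)).
    by apply: eq_eseriesr => j _; rewrite -!EFinM -!EFinD natrD; congr (_%:E); ring.
  rewrite nneseriesD; first last.
  - by move=> j _ _; rewrite -EFinM lee_fin !mulr_ge0 ?exprn_ge0 ?ler0n.
  - by move=> j _ _; rewrite -!EFinM -EFinD lee_fin addr_ge0 // !mulr_ge0 ?exprn_ge0 ?ler0n.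
  rewrite nneseriesD; first last.
  - by move=> j _ _; rewrite -EFinM lee_fin !mulr_ge0 ?exprn_ge0 ?ler0n.
  - by move=> j _ _; rewrite -EFinM lee_fin !mulr_ge0 ?exprn_ge0 ?ler0n.
  rewrite !nneseriesZl ?qm1 ?qm2 ?qs //; last 3 first.
  - by move=> j _; rewrite lee_fin.
  - by move=> j _; rewrite lee_fin mulr_ge0.
  - by move=> j _; rewrite lee_fin mulr_ge0 ?exprn_ge0.
  by rewrite mule1 -!EFinM -!EFinD; congr (_%:E); ring.
rewrite nneseriesD; first last.
- by move=> j _ _; rewrite lee_fin !mulr_ge0 ?exprn_ge0.
- by move=> j _ _; rewrite -EFinD lee_fin addr_ge0 // !mulr_ge0 ?m1_ge0 ?m2_ge0.
rewrite nneseriesD; first last.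
- by move=> j _ _; rewrite lee_fin !mulr_ge0 ?m1_ge0.
- by move=> j _ _; rewrite lee_fin !mulr_ge0 ?m2_ge0.
by rewrite -!nneseriesZl //; move=> j _; rewrite lee_fin ?mulr_ge0.
Qed.
End convmom.

Section convnmom.
Variables (q : nat -> R) (m1 m2 : R).
Hypothesis q0 : forall k, (0 <= q k)%R.
Hypothesis qs : \sum_(k <oo) (q k)%:E = 1.
Hypothesis qm1 : \sum_(k <oo) (k%:R * q k)%:E = m1%:E.
Hypothesis qm2 : \sum_(k <oo) (k%:R ^+ 2 * q k)%:E = m2%:E.

Lemma convn_ge0 n k : (0 <= convn q n k)%R.
Proof.
elim: n k => [|n ih] k /=; first by rewrite ler0n.
by rewrite /Defs.conv sumr_ge0 // => i _; rewrite mulr_ge0.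
Qed.

Lemma convn_mom n :
  [/\ \sum_(k <oo) (convn q n k)%:E = 1,
      \sum_(k <oo) (k%:R * convn q n k)%:E = (n%:R * m1)%:E &
      \sum_(k <oo) (k%:R ^+ 2 * convn q n k)%:E =
        (n%:R * m2 + n%:R * (n%:R - 1) * m1 ^+ 2)%:E].
Proof.
elim: n => [|n [h0 h1 h2]].
  have z (w : nat -> R) : (forall k, 0 <= w k)%R ->
      \sum_(k <oo) (w k * convn q 0 k)%:E = (w 0%N)%:E.
    move=> w0; rewrite (@series_fin _ 1%N); last first.
    - by case=> // k _ /=; rewrite mulr0.
    - by move=> k; rewrite lee_fin mulr_ge0 ?ler0n.
    by rewrite big_nat1 /= mulr1.
  split.
  - by rewrite -(z (fun=> 1%R)) //; apply: eq_eseriesr => k _; rewrite mul1r.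
  - by rewrite (z (fun k => (k%:R)%R)) // mul0r.
  - by rewrite (z (fun k => (k%:R ^+ 2)%R)) ?expr0n ?mul0r ?addr0 // => k; rewrite exprn_ge0.
have p0 := convn_ge0 n.
split => /=.
- by rewrite conv_m0.
- by rewrite (conv_m1 q0 qs qm1 p0) h0 h1 mule1 -EFinD -addn1 natrD; congr (_%:E); ring.
- rewrite (conv_m2 q0 qs qm1 qm2 p0) h0 h1 h2 mule1 -!EFinM -!EFinD -addn1 natrD.
  by congr (_%:E); ring.
Qed.
End convnmom.

Lemma expR_series (x : R) :
  \sum_(n <oo) ((x ^+ n / n`!%:R)%R)%:E = (expR x)%:E.
Proof.
rewrite /expR -EFin_lim; last exact: is_cvg_series_exp_coeff.
apply/congr_lim/funext => n /=.
by rewrite /series /= sumEFin.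
Qed.

Lemma series_shift1 (f : nat -> \bar R) :
  (forall k, 0 <= f k) ->
  \sum_(k <oo) f k = f 0%N + \sum_(k <oo) f k.+1.
Proof.
move=> f0; rewrite (nneseries_split 0 1)// add0n big_nat1.
congr (_ + _); rewrite -nneseries_addn //.
by apply: eq_eseriesr => i _; rewrite addn1.
Qed.

Lemma poisw_ge0 (L : R) n : (0 <= L)%R -> (0 <= poisw L n)%R.
Proof. by move=> L0; rewrite /poisw !mulr_ge0 ?expR_ge0 ?exprn_ge0 ?invr_ge0 ?ler0n. Qed.

Lemma fact_neq0 n : (n`!%:R : R) != 0%R.
Proof. by rewrite pnatr_eq0 -lt0n fact_gt0. Qed.

Lemma pois1 (L : R) : (0 <= L)%R ->
  \sum_(n <oo) (n%:R * poisw L n)%:E = L%:E.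
Proof.
move=> L0; rewrite series_shift1; last by move=> k; rewrite lee_fin mulr_ge0 ?poisw_ge0.
rewrite mul0r add0e.
transitivity (\sum_(n <oo) (expR (- L) * L)%:E * (L ^+ n / n`!%:R)%:E).
  apply: eq_eseriesr => n _; rewrite -EFinM /poisw factS natrM; congr (_%:E).
  have := fact_neq0 n; have : (n.+1%:R : R) != 0%R by rewrite pnatr_eq0.
  by move=> h1 h2; rewrite exprS; field; rewrite fact_neq0 /= addrC natr1.
rewrite nneseriesZl; last by move=> n _; rewrite lee_fin divr_ge0 ?exprn_ge0 ?ler0n.
rewrite expR_series -EFinM; congr (_%:E).
by rewrite mulrAC expRN mulVf ?mul1r // gt_eqF ?expR_gt0.
Qed.

Lemma pois2 (L : R) : (0 <= L)%R ->
  \sum_(n <oo) (n%:R * (n%:R - 1) * poisw L n)%:E = (L ^+ 2)%:E.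
Proof.
move=> L0.
have g0 n : (0 <= n%:R * (n%:R - 1) :> R)%R.
  by case: n => [|n]; rewrite ?mul0r // mulr_ge0 // -natr1 addrK ler0n.
rewrite series_shift1; last by move=> k; rewrite lee_fin mulr_ge0 ?poisw_ge0.
rewrite series_shift1; last by move=> k; rewrite lee_fin mulr_ge0 ?poisw_ge0.
rewrite mul0r subrr mulr0 !mul0r !add0e.
transitivity (\sum_(n <oo) (expR (- L) * L ^+ 2)%:E * (L ^+ n / n`!%:R)%:E).
  apply: eq_eseriesr => n _; rewrite -EFinM /poisw !factS !natrM; congr (_%:E).
  rewrite !exprS; field.
  have hn : (0 <= n%:R :> R)%R by exact: ler0n.
  by rewrite fact_neq0 /= !gt_eqF //; lra.
rewrite nneseriesZl; last by move=> n _; rewrite lee_fin divr_ge0 ?exprn_ge0 ?ler0n.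
rewrite expR_series -EFinM; congr (_%:E).
by rewrite mulrAC expRN mulVf ?mul1r // gt_eqF ?expR_gt0.
Qed.

Lemma nn1_ge0 n : (0 <= n%:R * (n%:R - 1) :> R)%R.
Proof. by case: n => [|n]; rewrite ?mul0r // mulr_ge0 // -natr1 addrK ler0n. Qed.

Section lawYmom.
Variables (q : nat -> R) (m1 m2 : R).
Hypothesis q0 : forall k, (0 <= q k)%R.
Hypothesis qs : \sum_(k <oo) (q k)%:E = 1.
Hypothesis qm1 : \sum_(k <oo) (k%:R * q k)%:E = m1%:E.
Hypothesis qm2 : \sum_(k <oo) (k%:R ^+ 2 * q k)%:E = m2%:E.
Variable L : R.
Hypothesis L0 : (0 <= L)%R.

Lemma lawY_w (w : nat -> R) : (forall k, 0 <= w k)%R ->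
  \sum_(k <oo) (w k)%:E * \sum_(n <oo) (poisw L n * convn q n k)%:E =
  \sum_(n <oo) (poisw L n)%:E * \sum_(k <oo) (w k * convn q n k)%:E.
Proof.
move=> w0.
have c0 := convn_ge0 q0.
transitivity (\sum_(k <oo) \sum_(n <oo) (poisw L n)%:E * (w k * convn q n k)%:E).
  apply: eq_eseriesr => k _; rewrite -nneseriesZl; last first.
    by move=> n _; rewrite lee_fin mulr_ge0 ?poisw_ge0.
  by apply: eq_eseriesr => n _; rewrite -!EFinM; congr (_%:E); ring.
rewrite nneseries_interchange; last by move=> i j; rewrite -EFinM lee_fin mulr_ge0 ?poisw_ge0 ?mulr_ge0.
apply/congr_lim/funext => m; apply: eq_bigr => n _; rewrite nneseriesZl //.
by move=> k _; rewrite lee_fin mulr_ge0.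
Qed.

Lemma lawY_m1 :
  \sum_(k <oo) (k%:R)%:E * \sum_(n <oo) (poisw L n * convn q n k)%:E = (m1 * L)%:E.
Proof.
rewrite lawY_w //.
transitivity (\sum_(n <oo) m1%:E * (n%:R * poisw L n)%:E).
  apply: eq_eseriesr => n _.
  have [_ -> _] := convn_mom q0 qs qm1 qm2 n.
  by rewrite -!EFinM; congr (_%:E); ring.
rewrite nneseriesZl ?pois1 // => n _.
by rewrite lee_fin mulr_ge0 ?poisw_ge0.
Qed.

Lemma lawY_m2 :
  \sum_(k <oo) (k%:R ^+ 2)%:E * \sum_(n <oo) (poisw L n * convn q n k)%:E =
  (m2 * L + m1 ^+ 2 * L ^+ 2)%:E.
Proof.
rewrite lawY_w //; try by move=> k; rewrite exprn_ge0.
transitivity (\sum_(n <oo) (m2%:E * (n%:R * poisw L n)%:E +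
   (m1 ^+ 2)%:E * (n%:R * (n%:R - 1) * poisw L n)%:E)).
  apply: eq_eseriesr => n _.
  have [_ _ ->] := convn_mom q0 qs qm1 qm2 n.
  by rewrite -!EFinM -EFinD; congr (_%:E); ring.
have m20 : (0 <= m2)%R by apply: (m2_ge0 q0 qm2).
have pw n : (0 <= poisw L n)%R by apply: poisw_ge0.
rewrite nneseriesD; first last.
- by move=> n _ _; rewrite -EFinM lee_fin mulr_ge0 ?sqr_ge0 // mulr_ge0 ?nn1_ge0.
- by move=> n _ _; rewrite -EFinM lee_fin mulr_ge0 // mulr_ge0.
rewrite !nneseriesZl ?pois1 ?pois2 //; try by move=> n _; rewrite lee_fin mulr_ge0 ?nn1_ge0.
Qed.
End lawYmom.
End H.

Section CC.
End CC.
Local Open Scope ereal_scope.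
Section I.
Variable R : realType.
Variables (px : nat -> R) (psi fAt : R -> R).
Let D : set R := `[0%R, +oo[.
Hypothesis px0 : forall k, (0 <= px k)%R.
Hypothesis Lam0 : forall a, (0 <= cumint psi a)%R.
Hypothesis mlaw : forall k, measurable_fun D (fun a => lawY px psi a k).
Hypothesis mfAt : measurable_fun D fAt.
Hypothesis fAt0 : forall a, D a -> (0 <= fAt a)%R.

Lemma mD : measurable D. Proof. exact: measurable_itv. Qed.

Lemma lawY_ge0 a k : 0 <= lawY px psi a k.
Proof.
by apply: nneseries_ge0 => n _ _; rewrite lee_fin mulr_ge0 ?poisw_ge0 ?convn_ge0.
Qed.

Lemma mom_lawYt (w : nat -> R) (F : R -> R) : (forall k, 0 <= w k)%R ->
  (forall a, D a -> \sum_(k <oo) (w k)%:E * lawY px psi a k = (F a)%:E) ->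
  \sum_(k <oo) (w k)%:E * lawYt px psi fAt k =
  \int[lebesgue_measure]_(a in D) (fAt a * F a)%:E.
Proof.
move=> w0 hF.
have mg k : measurable_fun D (fun a => (fAt a)%:E * lawY px psi a k).
  by apply: emeasurable_funM => //; apply/measurable_EFinP.
have g0 k a : D a -> 0 <= (fAt a)%:E * lawY px psi a k.
  by move=> Da; rewrite mule_ge0 ?lee_fin ?fAt0 ?lawY_ge0.
transitivity (\sum_(k <oo) \int[lebesgue_measure]_(a in D)
   ((w k)%:E * ((fAt a)%:E * lawY px psi a k))).
  apply: eq_eseriesr => k _; rewrite /lawYt -/D ge0_integralZl_EFin //.
  all: try exact: mD. all: try exact: g0. exact: mg.
transitivity (\int[lebesgue_measure]_(a in D) \sum_(k <oo)
   ((w k)%:E * ((fAt a)%:E * lawY px psi a k))).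
  rewrite integral_nneseries //.
  - exact: mD.
  - by move=> k; apply: measurable_funeM; exact: mg.
  - by move=> k a Da; rewrite mule_ge0 ?lee_fin //; apply: g0.
apply: eq_integral => a Da.
transitivity (\sum_(k <oo) (fAt a)%:E * ((w k)%:E * lawY px psi a k)).
  by apply: eq_eseriesr => k _; rewrite muleCA.
rewrite nneseriesZl; last by move=> k _; rewrite mule_ge0 ?lee_fin ?lawY_ge0.
rewrite hF; first by rewrite -EFinM.
by rewrite inE in Da.
Qed.
End I.

Section J.
Variable R : realType.
Variable psi : R -> R.
Let D : set R := `[0%R, +oo[.
Hypothesis mpsi : measurable_fun D psi.
Hypothesis psi0 : forall t, (0 <= t)%R -> (0 <= psi t)%R.
Hypothesis ipsi : forall t, (0 <= t)%R ->
   lebesgue_measure.-integrable `[0%R, t] (fun s => (psi s)%:E).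

Let J t := \int[lebesgue_measure]_(s in `[0%R, t]) (psi s)%:E.

Lemma sub0D (t : R) : `[0%R, t] `<=` D.
Proof.
move=> x /=; rewrite !in_itv /= => /andP[h _]; by rewrite /D /= in_itv /= h.
Qed.

Lemma J_ge0 t : 0 <= J t.
Proof.
apply: integral_ge0 => x /=; rewrite in_itv /= => /andP[h _].
by rewrite lee_fin psi0.
Qed.

Lemma J_le s t : (s <= t)%R -> J s <= J t.
Proof.
move=> st; apply: ge0_subset_integral => //.
- apply/measurable_EFinP; apply: measurable_funS mpsi => //.
    exact: measurable_itv.
  exact: sub0D.
- by move=> x /=; rewrite in_itv /= => /andP[h _]; rewrite lee_fin psi0.
- move=> x /=; rewrite !in_itv /= => /andP[h1 h2].
  by rewrite h1 (le_trans h2 st).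
Qed.

Lemma J_fin t : J t \is a fin_num.
Proof.
have h : J (Num.max t 0%R) \is a fin_num.
  apply: integrable_fin_num; first exact: measurable_itv.
  by apply: ipsi; rewrite le_max lexx orbT.
rewrite fin_numElt (lt_le_trans _ (J_ge0 t)) ?ltNyr //=.
have tm : (t <= Num.max t 0%R)%R by rewrite le_max lexx.
apply: (le_lt_trans (J_le tm)).
by move: h; rewrite fin_numElt => /andP[].
Qed.

Lemma Lam0 a : (0 <= cumint psi a)%R.
Proof. exact: fine_ge0 (J_ge0 a). Qed.

Lemma Lam_nd : {homo cumint psi : s t / (s <= t)%R}.
Proof.
move=> s t st; apply: fine_le; rewrite ?inE; try exact: J_fin.
exact: J_le.
Qed.

Lemma mLam : measurable_fun D (cumint psi).
Proof. by apply: nondecreasing_measurable; [exact: measurable_itv | exact: Lam_nd]. Qed.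

Lemma mpois n : measurable_fun D (fun a => poisw (cumint psi a) n).
Proof.
rewrite /poisw; apply: measurable_funM; last exact: measurable_cst.
apply: measurable_funM; last exact: measurable_funX mLam.
apply: measurableT_comp; first exact: measurable_expR.
exact: measurable_funN mLam.
Qed.

Lemma mlawY (px : nat -> R) k : (forall k, (0 <= px k)%R) ->
  measurable_fun D (fun a => lawY px psi a k).
Proof.
move=> px0; rewrite /lawY.
apply: (@ge0_emeasurable_sum _ _ _ D
  (fun n a => (poisw (cumint psi a) n * convn px n k)%:E) xpredT).
- by move=> n a _ _; rewrite lee_fin mulr_ge0 ?poisw_ge0 ?Lam0 ?convn_ge0.
- move=> n _; apply/measurable_EFinP; apply: measurable_funM; last exact: measurable_cst.
  exact: mpois.
Qed.
End J.


Local Close Scope ereal_scope.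

Lemma fin_of_mul (R : realType) (c : R) (x : \bar R) : (0 < c)%R -> (0 <= x)%E ->
  (c%:E * x)%E \is a fin_num -> x \is a fin_num.
Proof. by move=> c0; case: x => // _; rewrite mulry gtr0_sg // mul1e. Qed.

Theorem mainTheorem6 (R : realType) (px : nat -> R) (psi fAt : R -> R) :
  (* law of Xtilde (burden of a consumed prey, independent of t) *)
  is_pmf px ->
  (* intensity psi of consumption times: nonnegative, locally integrable *)
  measurable_fun (`[0, +oo[ : set R) psi ->
  (forall t, 0 <= t -> 0 <= psi t) ->
  (forall t, 0 <= t ->
     lebesgue_measure.-integrable `[0%R, t] (fun s => (psi s)%:E)) ->
  (* density of the age Atilde of a first predator consumed by the second *)
  measurable_fun (`[0, +oo[ : set R) fAt ->
  (forall a, 0 <= a -> 0 <= fAt a) ->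
  (\int[lebesgue_measure]_(a in `[0%R, +oo[) (fAt a)%:E = 1)%E ->
  (* moments finite, expectations positive *)
  let EX := mom1 (fun k => (px k)%:E) in
  let EX2 := mom2 (fun k => (px k)%:E) in
  let EY := mom1 (lawYt px psi fAt) in
  let EY2 := mom2 (lawYt px psi fAt) in
  EX \is a fin_num -> EX2 \is a fin_num -> (0 < EX)%E ->
  EY \is a fin_num -> EY2 \is a fin_num -> (0 < EY)%E ->
  fine EY2 / fine EY >= fine EY + fine EX2 / fine EX.
Proof.
move=> [px0 qs] mpsi psi0 ipsi mfAt fAt0 int1 EX EX2 EY EY2 fEX fEX2 EX0 fEY fEY2 EY0.
set D := (`[0%R, +oo[%classic : set R).
have fAt0' a : D a -> 0 <= fAt a.
  by rewrite /D /= in_itv /= andbT; apply: fAt0.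
set m1 := fine EX; set m2 := fine EX2.
have qm1 : (\sum_(k <oo) (k%:R * px k)%:E = m1%:E)%E.
  rewrite /m1 fineK // /EX /mom1; apply: eq_eseriesr => k _; by rewrite EFinM.
have qm2 : (\sum_(k <oo) (k%:R ^+ 2 * px k)%:E = m2%:E)%E.
  rewrite /m2 fineK // /EX2 /mom2; apply: eq_eseriesr => k _; by rewrite EFinM.
have m1pos : 0 < m1 by rewrite /m1 -lte_fin fineK.
have m20 : 0 <= m2 by apply: (m2_ge0 px0 qm2).
pose L := cumint psi.
have L0 a : 0 <= L a by apply: Lam0.
have mL : measurable_fun D L by apply: mLam.
have mlaw k : measurable_fun D (fun a => lawY px psi a k) by apply: mlawY.
set A := (\int[lebesgue_measure]_(a in D) (fAt a * L a)%:E)%E.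
set B := (\int[lebesgue_measure]_(a in D) (fAt a * L a ^+ 2)%:E)%E.
have mA : measurable_fun D (fun a => (fAt a * L a)%:E).
  by apply/measurable_EFinP; apply: measurable_funM.
have mB : measurable_fun D (fun a => (fAt a * L a ^+ 2)%:E).
  by apply/measurable_EFinP; apply: measurable_funM => //; apply: measurable_funX.
have mF : measurable_fun D (fun a => (fAt a)%:E).
  by apply/measurable_EFinP.
have A0 : (0 <= A)%E.
  by apply: integral_ge0 => a Da; rewrite lee_fin mulr_ge0 ?fAt0'.
have B0 : (0 <= B)%E.
  by apply: integral_ge0 => a Da; rewrite lee_fin mulr_ge0 ?fAt0' ?exprn_ge0.
have hEY : EY = (m1%:E * A)%E.
  rewrite /EY /mom1 (@mom_lawYt R px psi fAt px0 L0 mlaw mfAt fAt0' (fun k => k%:R)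
     (fun a => m1 * L a)) //; last first.
    by move=> a Da; rewrite /lawY (lawY_m1 px0 qs qm1 qm2).
  rewrite -ge0_integralZl_EFin //; last first.
  all: try exact: measurable_itv.
  all: try by move=> a Da; rewrite lee_fin mulr_ge0 ?fAt0'.
  all: try exact: (ltW m1pos).
  by apply: eq_integral => a _; rewrite -EFinM; congr (_%:E); ring.
have hEY2 : EY2 = (m2%:E * A + (m1 ^+ 2)%:E * B)%E.
  rewrite /EY2 /mom2 (@mom_lawYt R px psi fAt px0 L0 mlaw mfAt fAt0' (fun k => k%:R ^+ 2)
     (fun a => m2 * L a + m1 ^+ 2 * L a ^+ 2)) //;
    try by move=> a Da; rewrite /lawY (lawY_m2 px0 qs qm1 qm2).
  rewrite -!ge0_integralZl_EFin //.
  all: try exact: measurable_itv.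
  all: try by move=> a Da; rewrite lee_fin mulr_ge0 ?fAt0' ?exprn_ge0.
  all: try exact: sqr_ge0.
  rewrite -ge0_integralD //.
  all: try exact: measurable_itv.
  all: try by move=> a Da; rewrite lee_fin !mulr_ge0 ?fAt0' ?exprn_ge0 ?sqr_ge0.
  all: try by apply: measurable_funeM.
  all: try by move=> a Da; rewrite -EFinM lee_fin mulr_ge0 ?sqr_ge0 // mulr_ge0 ?fAt0' // exprn_ge0.
  by apply: eq_integral => a _; rewrite -!EFinM -EFinD; congr (_%:E); ring.
have Afin : A \is a fin_num by apply: (fin_of_mul m1pos A0); rewrite -hEY.
have Bfin : B \is a fin_num.
  move: fEY2; rewrite hEY2 fin_numD => /andP[_ h].
  by apply: (fin_of_mul _ B0 h); rewrite exprn_gt0.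
set a := fine A; set b := fine B.
have Aa : A = a%:E by rewrite fineK.
have Bb : B = b%:E by rewrite fineK.
have a0 : 0 <= a by rewrite -lee_fin -Aa.
have apos : 0 < a.
  move: EY0; rewrite hEY Aa -EFinM lte_fin => h.
  by rewrite lt_neqAle a0 andbT; apply/eqP => a00; move: h; rewrite -a00 mulr0 ltxx.
have jen : a ^+ 2 <= b.
  have J1 : (\int[lebesgue_measure]_(x in D) ((2 * a)%:E * (fAt x * L x)%:E) <=
     \int[lebesgue_measure]_(x in D) ((fAt x * L x ^+ 2)%:E + (a ^+ 2)%:E * (fAt x)%:E))%E.
    apply: ge0_le_integral.
    - exact: measurable_itv.
    - by move=> x Dx; rewrite -EFinM lee_fin !mulr_ge0 ?fAt0' // mulr_ge0.
    - by apply: measurable_funeM.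
    - apply: emeasurable_funD => //; by apply: measurable_funeM.
    move=> x Dx; rewrite -!EFinM -EFinD lee_fin.
    have := mulr_ge0 (fAt0' x Dx) (sqr_ge0 (L x - a)).
    by move=> h; nra.
  move: J1; rewrite ge0_integralD //; first last.
  all: try exact: measurable_itv.
  all: try by move=> x Dx; rewrite -?EFinM lee_fin !mulr_ge0 ?fAt0' ?exprn_ge0 ?sqr_ge0.
  all: try by apply: measurable_funeM.
  have mD : measurable D by exact: measurable_itv.
  rewrite (@ge0_integralZl_EFin _ _ _ lebesgue_measure D mD (fun x => (fAt x * L x)%:E)).
  rewrite (@ge0_integralZl_EFin _ _ _ lebesgue_measure D mD (fun x => (fAt x)%:E)).
  rewrite -/A -/B int1 Aa Bb mule1 -!EFinM -EFinD lee_fin.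
  - by move=> h; nra.
  all: try by move=> x Dx; rewrite lee_fin ?mulr_ge0 ?fAt0'.
  all: try by rewrite mulr_ge0.
  all: try by [].
rewrite hEY hEY2 Aa Bb -!EFinM -EFinD /=.
have m1n : m1 != 0 by rewrite gt_eqF.
have an : a != 0 by rewrite gt_eqF.
have key : m1 * a + m2 / m1 = (m1 ^+ 2 * a ^+ 2 + m2 * a) / (m1 * a).
  by field; rewrite m1n an.
rewrite key; apply: ler_wpM2r.
  by rewrite invr_ge0 mulr_ge0 // ltW.
have jen2 : 0 <= b - a ^+ 2 by rewrite subr_ge0.
have := mulr_ge0 (sqr_ge0 m1) jen2.
by move=> h; nra.
Qed.
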